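(* Let $f:[0,\infty)\to\mathbb{R}$ be convex with $f(1)=0$ and $G:[0,\mathsf{D_m}(f))\to[0,\infty)$ non-decreasing with $G(0)=0$. Then: (1) for a fixed channel $p_{Y|X}$ between finite alphabets, $I_{G,f}(X;Y)$ is a concave function of the input distribution $p_X$; (2) if $X\to Y\to Z$ is a Markov chain, then $I_{G,f}(X;Y)\ge I_{G,f}(X;Z)$; (3) if $X\to Y\to Z$ is a Markov chain, then $I_{G,f}(X;YZ)=I_{G,f}(X;Y)$ and $I_{G,f}(XY;Z)=I_{G,f}(Y;Z)$.
   Context: All random variables take values in finite sets. $D_f(p\|q)=\sum_y q(y) f(p(y)/q(y))$ with $0f(0/0)=0$; $\mathsf{D_m}(f)=f(0)+\lim_{t\to\infty}f(t)/t$. $I_{G,f}(X;Y)=\min_{q_Y}\sum_x p_X(x)\,G(D_f(p_{Y|X=x}\|q_Y))$, minimum over distributions on the alphabet of $Y$. $X\to Y\to Z$ Markov means $X$ and $Z$ are conditionally independent given $Y$. *)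

(* Defs.v *)
From mathcomp Require Import all_boot all_order all_algebra.
From mathcomp Require Import all_classical all_reals all_analysis.
Set Implicit Arguments. Unset Strict Implicit. Unset Printing Implicit Defensive.
Import Order.TTheory GRing.Theory Num.Theory.
Import numFieldNormedType.Exports.
Local Open Scope classical_set_scope.
Local Open Scope ring_scope.

Section Defs.
Variable R : realType.

Definition is_pmf (T : finType) (p : T -> R) : Prop :=
  (forall t, 0 <= p t) /\ \sum_(t : T) p t = 1.

Definition convex_on_nonneg (f : R -> R) : Prop :=
  forall x y t, 0 <= x -> 0 <= y -> 0 <= t <= 1 ->
    f (t * x + (1 - t) * y) <= t * f x + (1 - t) * f y.

Definition slope_inf (f : R -> R) : \bar R :=
  lim ((fun t : R => (f t / t)%:E) @ pinfty_nbhs R).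

Definition Dm (f : R -> R) : \bar R := ((f 0)%:E + slope_inf f)%E.

(* f-divergence D_f(p || q) = sum_y q(y) f(p(y)/q(y)), with the conventions
   0 f(0/0) = 0 and 0 f(a/0) = a lim_{t->oo} f(t)/t for a > 0. *)
Definition Df (f : R -> R) (T : finType) (p q : T -> R) : \bar R :=
  (\sum_(y : T)
     (if (0 < q y)%R then (q y * f (p y / q y))%:E
      else if (0 < p y)%R then (p y)%:E * slope_inf f else 0))%E.

(* G is given on [0, D_m(f)); at the endpoint D_m(f) (reached by D_f exactly
   when the value is the maximal one) it is extended by its left limit,
   i.e. its supremum over [0, D_m(f)) (G is non-decreasing). *)
Definition Gext (f : R -> R) (G : R -> R) (d : \bar R) : \bar R :=
  if (d < Dm f)%E then (G (fine d))%:E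
  else ereal_sup [set (G r)%:E | r in [set r : R | 0 <= r /\ (r%:E < Dm f)%E]].

(* I_{G,f}(X;Y) = min_{q_Y} sum_x p_X(x) G(D_f(p_{Y|X=x} || q_Y))
   (taken as an infimum over distributions q_Y), from input pX and channel W *)
Definition Imut (f G : R -> R) (A B : finType) (pX : A -> R) (W : A -> B -> R)
  : \bar R :=
  ereal_inf [set (\sum_(a : A) (pX a)%:E * Gext f G (Df f (W a) q))%E
            | q in [set q : B -> R | is_pmf q]].

Definition marg1 (A B : finType) (P : A * B -> R) (a : A) : R :=
  \sum_(b : B) P (a, b).
Definition cond (A B : finType) (P : A * B -> R) (a : A) (b : B) : R :=
  P (a, b) / marg1 P a.

Definition Ijoint (f G : R -> R) (A B : finType) (P : A * B -> R) : \bar R :=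
  Imut f G (marg1 P) (cond P).

(* X -> Y -> Z Markov: X and Z conditionally independent given Y,
   p(x,y,z) p(y) = p(x,y) p(y,z) *)
Definition markov3 (X Y Z : finType) (P : X * Y * Z -> R) : Prop :=
  forall x y z,
    P (x, y, z) * (\sum_(x' : X) \sum_(z' : Z) P (x', y, z')) =
    (\sum_(z' : Z) P (x, y, z')) * (\sum_(x' : X) P (x', y, z)).

Definition pXY (X Y Z : finType) (P : X * Y * Z -> R) : X * Y -> R :=
  fun xy => \sum_(z : Z) P (xy.1, xy.2, z).
Definition pXZ (X Y Z : finType) (P : X * Y * Z -> R) : X * Z -> R :=
  fun xz => \sum_(y : Y) P (xz.1, y, xz.2).
Definition pYZ (X Y Z : finType) (P : X * Y * Z -> R) : Y * Z -> R :=
  fun yz => \sum_(x : X) P (x, yz.1, yz.2).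
Definition pX_YZ (X Y Z : finType) (P : X * Y * Z -> R) : X * (Y * Z) -> R :=
  fun t => P (t.1, t.2.1, t.2.2).

End Defs.

(* Main.v *)
Require Import Defs.
From mathcomp Require Import all_boot all_order all_algebra.
From mathcomp Require Import all_classical all_reals all_analysis.
From mathcomp Require Import lra ring.
Import Order.TTheory GRing.Theory Num.Theory.
Import numFieldNormedType.Exports.
Local Open Scope classical_set_scope.
Local Open Scope ring_scope.

Section S.
Variable R : realType.
Variable f : R -> R.
Hypothesis f_cvx : convex_on_nonneg f.
Lemma chord (a b d : R) : 0 <= a -> a < b -> b <= d ->
  (f b - f a) * (d - a) <= (f d - f a) * (b - a).
Proof.
move=> a0 ab bd.
have dpos : 0 < d - a by lra.
set l := (b - a) / (d - a).
have el : l * (d - a) = b - a by rewrite /l mulfVK // gt_eqF.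
have l0 : 0 <= l by rewrite /l divr_ge0 // ?ltW // subr_gt0.
have l1 : l <= 1 by rewrite /l ler_pdivrMr // mul1r; lra.
have := f_cvx d a l (le_trans a0 (ltW (lt_le_trans ab bd))) a0.
rewrite l0 l1 => /(_ isT).
have -> : l * d + (1 - l) * a = b by lra.
move=> H.
have H2 := ler_wpM2r (ltW dpos) H.
have -> : (f d - f a) * (b - a) = (l * f d + (1 - l) * f a - f a) * (d - a).
  rewrite -el; ring.
by apply: ler_wpM2r; [exact: ltW | lra].
Qed.

Lemma inv_cvg0 : (fun T : R => (f 0 / T)) @ pinfty_nbhs R --> (0:R).
Proof.
have HH := (@cvgM R R (pinfty_nbhs R) _ (fun=> f 0) (fun T : R => T^-1) (f 0) 0).
rewrite mulr0 in HH; apply: HH; first exact: cvg_cst.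
have H : \forall x \near pinfty_nbhs R, 0 < (fun x : R => x) x.
  by near=> x; near: x; apply: nbhs_pinfty_gt; rewrite num_real.
have := (@gtr0_cvgV0 R R (pinfty_nbhs R) _ (fun x => x) H).2.
apply; exact: cvg_id.
Unshelve. all: by end_near.
Qed.

Lemma slope_cvg : cvg ((fun T : R => (f T / T)%:E) @ pinfty_nbhs R).
Proof.
set m := fun T : R => ((f (Num.max T 1) - f 0) / Num.max T 1)%:E.
have mnd : {homo m : x y / (x <= y)%O >-> (x <= y)%O}.
  move=> x y xy; rewrite /m lee_fin.
  have x1 : 1 <= Num.max x 1 by rewrite le_max lexx orbT.
  have xy' : Num.max x 1 <= Num.max y 1 by rewrite ge_max !le_max xy lexx orbT.
  have := chord 0 _ _ (lexx 0) (lt_le_trans ltr01 x1) xy'.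
  rewrite !subr0 => H.
  rewrite ler_pdivrMr ?(lt_le_trans ltr01) // mulrAC ler_pdivlMr ?(lt_le_trans ltr01 (le_trans x1 xy')) //.
have hm := nondecreasing_cvge mnd.
have h0 : (fun T : R => (f 0 / T)%:E) @ pinfty_nbhs R --> (0:R)%:E.
  apply/fine_cvgP; split; first by near=> x.
  exact: inv_cvg0.
have hs := cvgeD (fin_num_adde_defl (ereal_sup (range m)) (isT : (0:R)%:E \is a fin_num)) hm h0.
apply/cvg_ex; exists (ereal_sup (range m) + (0:R)%:E)%E; apply: cvg_trans (hs _).
apply: near_eq_cvg.
near=> T.
have T1 : 1 < T by near: T; apply: nbhs_pinfty_gt; rewrite num_real.
rewrite /m /= (max_idPl (ltW T1)) -EFinD; congr (_%:E).
field; rewrite gt_eqF //; exact: lt_trans T1.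
Unshelve. all: by end_near.
Qed.

Lemma slope_ge (u t : R) : 0 <= u -> 0 < t ->
  (((f (u + t) - f u) / t)%:E <= slope_inf f)%E.
Proof.
move=> u0 t0; set c := (f (u + t) - f u) / t.
have ct : c * t = f (u + t) - f u by rewrite /c mulfVK // gt_eqF.
apply/lee_subgt0Pr => e e0.
rewrite /slope_inf; apply: lime_ge; first exact: slope_cvg.
near=> T.
have T1 : u + t < T by near: T; apply: nbhs_pinfty_gt; rewrite num_real.
have T2 : `|f u - c * u| / e < T by near: T; apply: nbhs_pinfty_gt; rewrite num_real.
have T0 : 0 < T by apply: lt_trans T1; lra.
have H := chord u (u + t) T u0 ltac:(lra) (ltW T1).
rewrite -ct mulrAC (_ : u + t - u = t) in H; last by ring.
rewrite ler_pM2r // in H.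
rewrite ltr_pdivrMr // in T2.
have T3 : c * u - f u < T * e.
  apply: le_lt_trans T2; rewrite -normrN opprB; exact: ler_norm.
rewrite -EFinB lee_fin ler_pdivlMr //.
nra.
Unshelve. all: by end_near.
Qed.

Definition persp (a b : R) : \bar R :=
  if 0 < b then (b * f (a / b))%:E
  else if 0 < a then (a%:E * slope_inf f)%E else 0%E.

Lemma Df_persp (T : finType) (p q : T -> R) :
  Df f p q = (\sum_(y : T) persp (p y) (q y))%E.
Proof. by []. Qed.

Lemma slope_fin_or_y : slope_inf f = +oo%E \/ exists r, slope_inf f = r%:E.
Proof.
have := @slope_ge 0 1 (lexx 0) ltr01.
case: (slope_inf f) => [r|_|] //=; first by right; exists r.
by left.
Qed.

Lemma persp_a0 a : 0 <= a -> persp a 0 = (a%:E * slope_inf f)%E.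
Proof.
move=> a0; rewrite /persp ltxx; case: ifP => // /negbT; rewrite -leNgt => a0'.
have -> : a = 0 by apply/le_anti; rewrite a0 a0'.
by rewrite mul0e.
Qed.

Lemma persp_hom k a b : 0 <= k -> 0 <= a -> 0 <= b ->
  persp (k * a) (k * b) = (k%:E * persp a b)%E.
Proof.
move=> k0 a0 b0.
have [->|kp] := eqVneq k 0; first by rewrite !mul0r /persp ltxx mul0e.
have k' : 0 < k by rewrite lt_neqAle eq_sym kp.
have [->|bp] := eqVneq b 0.
  by rewrite mulr0 !persp_a0 ?mulr_ge0 // EFinM muleA.
have b' : 0 < b by rewrite lt_neqAle eq_sym bp.
rewrite /persp mulr_gt0 // b' -EFinM mulrA.
have -> : k * a / (k * b) = a / b.
  by rewrite invfM mulrACA mulfV ?gt_eqF // mul1r.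
by [].
Qed.

Lemma persp_mixed a1 a2 b : 0 <= a1 -> 0 <= a2 -> 0 < b ->
  (persp (a1 + a2) b <= a1%:E * slope_inf f + persp a2 b)%E.
Proof.
move=> a10 a20 b0; rewrite /persp b0.
have [->|a1p] := eqVneq a1 0; first by rewrite add0r mul0e add0e.
have a1p' : 0 < a1 by rewrite lt_neqAle eq_sym a1p.
have := @slope_ge (a2/b) (a1/b) (divr_ge0 a20 (ltW b0)) (divr_gt0 a1p' b0).
case: slope_fin_or_y => [->|[r ->]].
  by move=> _; rewrite gt0_muley ?lte_fin // addye // leey.
rewrite lee_fin ler_pdivrMr ?divr_gt0 // => H.
rewrite -EFinM -EFinD lee_fin.
have e : a2 / b + a1 / b = (a1 + a2) / b by rewrite -mulrDl addrC.
rewrite e in H.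
have H2 := ler_wpM2l (ltW b0) H.
have e2 : b * (r * (a1 / b)) = a1 * r.
  by rewrite mulrC -mulrA divfK ?gt_eqF // mulrC.
rewrite e2 mulrBr in H2.
lra.
Qed.

Lemma persp_sub a1 b1 a2 b2 : 0 <= a1 -> 0 <= b1 -> 0 <= a2 -> 0 <= b2 ->
  (persp (a1 + a2) (b1 + b2) <= persp a1 b1 + persp a2 b2)%E.
Proof.
move=> a10 b10 a20 b20.
have [->|b1p] := eqVneq b1 0.
  have [->|b2p] := eqVneq b2 0.
    by rewrite addr0 !persp_a0 ?addr_ge0 // EFinD ge0_muleDl.
  have b2' : 0 < b2 by rewrite lt_neqAle eq_sym b2p.
  by rewrite add0r persp_a0 //; apply: persp_mixed.
have b1' : 0 < b1 by rewrite lt_neqAle eq_sym b1p.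
have [->|b2p] := eqVneq b2 0.
  rewrite addr0 (@persp_a0 a2 a20) addeC addrC; exact: persp_mixed.
have b2' : 0 < b2 by rewrite lt_neqAle eq_sym b2p.
have b12 : 0 < b1 + b2 by rewrite addr_gt0.
rewrite /persp b1' b2' b12 -EFinD lee_fin.
set l := b1 / (b1 + b2).
have l0 : 0 <= l by rewrite divr_ge0 // ltW.
have l1 : l <= 1 by rewrite ler_pdivrMr // mul1r lerDl.
have := f_cvx (a1/b1) (a2/b2) l (divr_ge0 a10 (ltW b1')) (divr_ge0 a20 (ltW b2')).
rewrite l0 l1 => /(_ isT).
have -> : l * (a1 / b1) + (1 - l) * (a2 / b2) = (a1 + a2) / (b1 + b2).
  rewrite /l; field.
  by rewrite gt_eqF // gt_eqF // gt_eqF.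
move=> H; have := ler_wpM2l (ltW b12) H.
have -> : (b1 + b2) * (l * f (a1 / b1) + (1 - l) * f (a2 / b2)) =
   b1 * f (a1 / b1) + b2 * f (a2 / b2).
  rewrite /l; field.
  by rewrite gt_eqF.
by [].
Qed.

Lemma persp_sum (I : Type) (r : seq I) (a b : I -> R) :
  (forall i, 0 <= a i) -> (forall i, 0 <= b i) ->
  (persp (\sum_(i <- r) a i) (\sum_(i <- r) b i) <= \sum_(i <- r) persp (a i) (b i))%E.
Proof.
move=> a0 b0; elim: r => [|x r IH]; first by rewrite !big_nil /persp ltxx.
rewrite !big_cons.
have sa : 0 <= \sum_(i <- r) a i by rewrite sumr_ge0.
have sb : 0 <= \sum_(i <- r) b i by rewrite sumr_ge0.
apply: (le_trans (@persp_sub _ _ _ _ (a0 x) (b0 x) sa sb)).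
exact: leeD2l IH.
Qed.

Lemma Df_dpi (B C : finType) (p q : B -> R) (K : B -> C -> R) :
  (forall b, 0 <= p b) -> (forall b, 0 <= q b) -> (forall b, is_pmf (K b)) ->
  (Df f (fun c => (\sum_b p b * K b c)%R) (fun c => (\sum_b q b * K b c)%R) <= Df f p q)%E.
Proof.
move=> p0 q0 Kp; rewrite !Df_persp.
have K0 b c : 0 <= K b c by case: (Kp b).
apply: (@le_trans _ _ (\sum_(c : C) \sum_(b : B) persp (p b * K b c) (q b * K b c))%E).
  apply: lee_sum => c _; apply: persp_sum => b; apply: mulr_ge0 => //.
rewrite exchange_big /=; apply: lee_sum => b _.
under eq_bigr => c _ do rewrite mulrC [q b * _]mulrC (@persp_hom _ _ _ (K0 b c) (p0 b) (q0 b)).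
rewrite -ge0_sume_distrl; last by move=> c _; rewrite lee_fin.
by rewrite sumEFin; case: (Kp b) => _ ->; rewrite mul1e.
Qed.

Hypothesis f1 : f 1 = 0.

Lemma Df_ge0 (T : finType) (p q : T -> R) : is_pmf p -> is_pmf q -> (0 <= Df f p q)%E.
Proof.
move=> [p0 p1] [q0 q1]; rewrite Df_persp.
apply: (le_trans _ (@persp_sum _ _ _ _ p0 q0)).
by rewrite p1 q1 /persp ltr01 divr1 f1 mulr0.
Qed.
End S.

Lemma pmf_push (R : realType) (B C : finType) (p : B -> R) (K : B -> C -> R) :
  is_pmf p -> (forall b, is_pmf (K b)) -> is_pmf (fun c => \sum_b p b * K b c).
Proof.
move=> [p0 p1] Kp; split.
  by move=> c; apply: sumr_ge0 => b _; apply: mulr_ge0 => //; case: (Kp b).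
rewrite exchange_big /= -[RHS]p1; apply: eq_bigr => b _.
by rewrite -mulr_sumr; case: (Kp b) => _ ->; rewrite mulr1.
Qed.


Section G.
Variable R : realType.
Variables f G : R -> R.
Hypothesis f_cvx : convex_on_nonneg f.
Hypothesis f1 : f 1 = 0.
Hypothesis Dm_pos : (0%E < Dm f)%E.
Hypothesis G_nonneg : forall d : R, 0 <= d -> (d%:E < Dm f)%E -> 0 <= G d.
Hypothesis G_nondecr : forall d1 d2 : R, 0 <= d1 -> d1 <= d2 -> (d2%:E < Dm f)%E ->
                 G d1 <= G d2.
Hypothesis G0 : G 0 = 0.

Lemma fin_below (d : \bar R) : (0 <= d)%E -> (d < Dm f)%E -> d = (fine d)%:E /\ 0 <= fine d.
Proof.
case: d => [r| |] /=.
- by move=> r0 _; split.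
- by move=> _; rewrite ltNge leey.
- by rewrite leeNy_eq.
Qed.

Lemma Gext_ge0 d : (0 <= d)%E -> (0 <= Gext f G d)%E.
Proof.
move=> d0; rewrite /Gext; case: ifP => dD.
  have [e r0] := fin_below _ d0 dD; rewrite lee_fin; apply: G_nonneg => //.
  by rewrite -e.
apply: le_ereal_sup_tmp; exists (G 0)%:E; last by rewrite G0.
by exists 0.
Qed.

Lemma Gext_mono d1 d2 : (0 <= d1)%E -> (d1 <= d2)%E -> (Gext f G d1 <= Gext f G d2)%E.
Proof.
move=> d10 d12; rewrite /Gext; case: ifP => d1D; case: ifP => d2D //.
- have [e1 r1] := fin_below _ d10 d1D.
  have [e2 r2] := fin_below _ (le_trans d10 d12) d2D.
  rewrite lee_fin; apply: G_nondecr => //; last by rewrite -e2.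
  by move: d12; rewrite {1}e1 {1}e2 lee_fin.
- have [e1 r1] := fin_below _ d10 d1D.
  apply: le_ereal_sup_tmp; exists (G (fine d1))%:E => //.
  by exists (fine d1) => //; split => //; rewrite -e1.
- by move: d1D; rewrite (le_lt_trans d12 d2D).
Qed.

Lemma Imut_le (A B C : finType) (pX : A -> R) (W : A -> B -> R) (W' : A -> C -> R)
  (K : B -> C -> R) :
  (forall a, 0 <= pX a) -> (forall b, is_pmf (K b)) ->
  (forall a, 0 < pX a -> is_pmf (W a) /\ W' a = (fun c => \sum_b W a b * K b c)) ->
  (Imut f G pX W' <= Imut f G pX W)%E.
Proof.
move=> pX0 Kp HW.
rewrite /Imut; apply: le_ereal_inf_tmp => _ [q qp <-].
apply: ge_ereal_inf.
exists (\sum_a (pX a)%:E * Gext f G (Df f (W' a) (fun c => (\sum_b q b * K b c)%R)))%E.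
  by exists (fun c => (\sum_b q b * K b c)%R) => //; exact: pmf_push.
apply: lee_sum => a _.
have [pa0|pa] := eqVneq (pX a) 0; first by rewrite pa0 !mul0e.
have pa' : 0 < pX a by rewrite lt_neqAle eq_sym pa pX0.
have [Wp ->] := HW a pa'.
apply: lee_wpmul2l; first by rewrite lee_fin.
apply: Gext_mono.
  by apply: Df_ge0 => //; exact: pmf_push.
by apply: Df_dpi => //; [case: Wp | case: qp].
Qed.

Lemma Imut_concave (X Y : finType) (W : X -> Y -> R) (p1 p2 : X -> R) (l : R) :
  (forall x, is_pmf (W x)) -> is_pmf p1 -> is_pmf p2 -> 0 <= l <= 1 ->
  (l%:E * Imut f G p1 W + (1 - l)%:E * Imut f G p2 W
     <= Imut f G (fun x => l * p1 x + (1 - l) * p2 x)%R W)%E.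
Proof.
move=> Wp [p10 _] [p20 _] /andP[l0 l1].
have l0' : 0 <= 1 - l by rewrite subr_ge0.
rewrite /Imut; apply: le_ereal_inf_tmp => _ [q qp <-].
have Ge x : (0 <= Gext f G (Df f (W x) q))%E by apply/Gext_ge0/Df_ge0.
have -> : (\sum_x (l * p1 x + (1 - l) * p2 x)%:E * Gext f G (Df f (W x) q) =
   l%:E * \sum_x (p1 x)%:E * Gext f G (Df f (W x) q) +
   (1 - l)%:E * \sum_x (p2 x)%:E * Gext f G (Df f (W x) q))%E.
  rewrite !ge0_sume_distrr; last 2 first.
  - by move=> x _; apply: mule_ge0 => //; rewrite lee_fin.
  - by move=> x _; apply: mule_ge0 => //; rewrite lee_fin.
  rewrite -big_split /=; apply: eq_bigr => x _.
  rewrite EFinD ge0_muleDl ?lee_fin ?mulr_ge0 // !EFinM !muleA //.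
apply: leeD; apply: lee_wpmul2l; rewrite ?lee_fin //;
  by apply: ereal_inf_lbound; exists q.
Qed.

End G.

Lemma cond_pmf (R : realType) (A B : finType) (Q : A * B -> R) a :
  (forall t, 0 <= Q t) -> 0 < marg1 Q a -> is_pmf (cond Q a).
Proof.
move=> Q0 m0; split => [b|]; first by rewrite /cond divr_ge0 // ltW.
by rewrite /cond -mulr_suml divff // gt_eqF.
Qed.

Lemma sum_ind (R : realType) (T : finType) (t : T) (F : T -> R) :
  \sum_(u : T) (t == u)%:R * F u = F t.
Proof.
rewrite (bigD1 t) //= eqxx mul1r big1 ?addr0 // => u /negbTE.
by rewrite eq_sym => ->; rewrite mul0r.
Qed.

Section M.
Variables (R : realType) (X Y Z : finType) (P : X * Y * Z -> R).
Hypothesis Pp : is_pmf P.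
Hypothesis Pm : markov3 P.
Variable z0 : Z.

Local Notation PXY x y := (\sum_(z' : Z) P (x, y, z')).
Local Notation PY y := (\sum_(x' : X) \sum_(z' : Z) P (x', y, z')).
Local Notation PYZ y z := (\sum_(x' : X) P (x', y, z)).

Definition K1 (y : Y) (z : Z) : R :=
  if PY y == 0 then (z == z0)%:R else PYZ y z / PY y.

Lemma P0 t : 0 <= P t. Proof. by case: Pp. Qed.

Lemma PY0 y : PY y = 0 -> forall x z, P (x, y, z) = 0.
Proof.
move=> h x z.
have h1 := @psumr_eq0P _ _ _ _ (fun x' _ => sumr_ge0 _ (fun z' _ => P0 (x', y, z'))) h x isT.
exact: (@psumr_eq0P _ _ _ _ (fun z' _ => P0 (x, y, z')) h1 z isT).
Qed.

Lemma markov_fact x y z : P (x, y, z) = PXY x y * K1 y z.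
Proof.
rewrite /K1; case: ifP => [/eqP h|/negbT h].
  by rewrite (PY0 _ h) big1 ?mul0r // => z' _; rewrite (PY0 _ h).
by rewrite mulrA -Pm mulfK.
Qed.

Lemma K1_pmf y : is_pmf (K1 y).
Proof.
have [h|h] := eqVneq (PY y) 0; rewrite /K1 ?h ?eqxx ?(negbTE h); split.
- by move=> z; rewrite ler0n.
- by rewrite (bigD1 z0) //= eqxx big1 ?addr0 // => z /negbTE ->.
- move=> z; rewrite divr_ge0 // ?sumr_ge0 // => x' _; rewrite ?sumr_ge0 // => *; exact: P0.
- by rewrite -mulr_suml exchange_big /= divff.
Qed.

End M.

Lemma sum_ind' (R : realType) (T : finType) (t : T) (F : T -> R) :
  \sum_(u : T) (u == t)%:R * F u = F t.
Proof.
rewrite -[RHS](sum_ind _ _ t F); apply: eq_bigr => u _; by rewrite eq_sym.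
Qed.

Lemma sum_ind1 (R : realType) (T : finType) (t : T) :
  \sum_(u : T) (t == u)%:R = 1 :> R.
Proof.
rewrite -[RHS](sum_ind _ _ t (fun _ => (1:R))); apply: eq_bigr => u _; by rewrite mulr1.
Qed.


Local Close Scope classical_set_scope.

Theorem lemma2 (R : realType) (f G : R -> R)
  (f_cvx : convex_on_nonneg f) (f1 : f 1 = 0)
  (Dm_pos : (0%E < Dm f)%E)
  (G_nonneg : forall d : R, 0 <= d -> (d%:E < Dm f)%E -> 0 <= G d)
  (G_nondecr : forall d1 d2 : R, 0 <= d1 -> d1 <= d2 -> (d2%:E < Dm f)%E ->
                 G d1 <= G d2)
  (G0 : G 0 = 0) :
  (* (1) concavity in the input distribution, channel fixed *)
  (forall (X Y : finType) (W : X -> Y -> R) (p1 p2 : X -> R) (l : R),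
      (forall x, is_pmf (W x)) -> is_pmf p1 -> is_pmf p2 -> 0 <= l <= 1 ->
      (l%:E * Imut f G p1 W + (1 - l)%:E * Imut f G p2 W
         <= Imut f G (fun x => l * p1 x + (1 - l) * p2 x)%R W)%E)
  /\
  (* (2) data processing *)
  (forall (X Y Z : finType) (P : X * Y * Z -> R),
      is_pmf P -> markov3 P ->
      (Ijoint f G (pXZ P) <= Ijoint f G (pXY P))%E)
  /\
  (* (3) *)
  (forall (X Y Z : finType) (P : X * Y * Z -> R),
      is_pmf P -> markov3 P ->
      Ijoint f G (pX_YZ P) = Ijoint f G (pXY P) /\
      Ijoint f G P = Ijoint f G (pYZ P)).
Proof.
split; first by move=> X Y W p1 p2 l; exact: Imut_concave.
have pickZ : forall (X Y Z : finType) (P : X * Y * Z -> R), is_pmf P -> Z.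
  move=> X Y Z P [_ Ps]; case: (pickP (@predT Z)) => [z _|h]; first exact: z.
  have e : \sum_t P t = 0 by apply: big1 => t _; move: (h t.2).
  by exfalso; move: Ps; rewrite e => /eqP; rewrite eq_sym oner_eq0.
split.
  move=> X Y Z P Pp Pm.
  have z0 := pickZ X Y Z P Pp.
  have P0 := @P0 _ _ _ _ P Pp.
  have eX : marg1 (pXZ P) = marg1 (pXY P).
    by apply: funext => x; rewrite /marg1 /pXZ /pXY /= exchange_big.
  rewrite /Ijoint eX.
  apply: (@Imut_le R f G f_cvx f1 G_nondecr _ _ _ _ _ _ (@K1 _ _ _ _ P z0)).
  - by move=> x; apply: sumr_ge0 => y _; apply: sumr_ge0 => z _; exact: P0.
  - exact: (@K1_pmf _ _ _ _ P Pp z0).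
  - move=> a pa; split; first by apply: cond_pmf => // t; rewrite /pXY sumr_ge0.
    apply: funext => z; rewrite /cond eX /pXZ /pXY /= mulr_suml; apply: eq_bigr => y _.
    by rewrite (@markov_fact _ _ _ _ P Pp Pm z0 a y z) mulrAC.
move=> X Y Z P Pp Pm.
have z0 := pickZ X Y Z P Pp.
have P0 := @P0 _ _ _ _ P Pp.
have K0 y z : 0 <= @K1 _ _ _ _ P z0 y z by case: (@K1_pmf _ _ _ _ P Pp z0 y).
split.
  have eX : marg1 (pX_YZ P) = marg1 (pXY P).
    apply: funext => x; rewrite /marg1 /pX_YZ /pXY /= pair_bigA.
    by apply: eq_bigr => -[y z] _.
  rewrite /Ijoint eX; apply/le_anti/andP; split.
  + apply: (@Imut_le R f G f_cvx f1 G_nondecr _ _ _ _ _ _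
      (fun y (u : Y * Z) => (u.1 == y)%:R * @K1 _ _ _ _ P z0 y u.2)).
    * by move=> x; apply: sumr_ge0 => y _; apply: sumr_ge0 => z _; exact: P0.
    * move=> y; split; first by move=> u; rewrite mulr_ge0 ?ler0n.
      have -> : \sum_(u : Y * Z) (u.1 == y)%:R * @K1 _ _ _ _ P z0 y u.2 =
          \sum_(y' : Y) \sum_(z : Z) (y' == y)%:R * @K1 _ _ _ _ P z0 y z.
        by rewrite pair_bigA; apply: eq_bigr => -[].
      under eq_bigr => y' _ do rewrite -mulr_sumr.
      by rewrite sum_ind'; case: (@K1_pmf _ _ _ _ P Pp z0 y).
    * move=> a pa; split; first by apply: cond_pmf => // t; rewrite /pXY sumr_ge0.
      apply: funext => -[y z]; rewrite /cond eX /pX_YZ /pXY /=.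
      under eq_bigr => b _ do rewrite mulrCA.
      by rewrite sum_ind (@markov_fact _ _ _ _ P Pp Pm z0 a y z) mulrAC.
  + apply: (@Imut_le R f G f_cvx f1 G_nondecr _ _ _ _ _ _ (fun (u : Y * Z) y => (u.1 == y)%:R)).
    * by move=> x; apply: sumr_ge0 => y _; apply: sumr_ge0 => z _; exact: P0.
    * by move=> u; split; [move=> y; rewrite ler0n | rewrite sum_ind1].
    * move=> a pa; split; first by apply: cond_pmf => [t|]; [exact: P0 | rewrite eX].
      apply: funext => y; rewrite /cond eX /pX_YZ /pXY /=.
      have -> : \sum_(u : Y * Z) P (a, u.1, u.2) / marg1 (pXY P) a * (u.1 == y)%:R =
          \sum_(y' : Y) \sum_(z : Z) (y' == y)%:R * (P (a, y', z) / marg1 (pXY P) a).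
        by rewrite pair_bigA; apply: eq_bigr => -[y' z] _; rewrite mulrC.
      rewrite (eq_bigr (fun y' => (y' == y)%:R * \sum_(z : Z) (P (a, y', z) / marg1 (pXY P) a))); last first.
        by move=> y' _; rewrite mulr_sumr.
      by rewrite sum_ind' mulr_suml.
rewrite /Ijoint /Imut; congr ereal_inf.
have key : forall q : Z -> R,
  (\sum_(a : X * Y) (marg1 P a)%:E * Gext f G (Df f (cond P a) q) =
   \sum_(y : Y) (marg1 (pYZ P) y)%:E * Gext f G (Df f (cond (pYZ P) y) q))%E.
  move=> q.
  have -> : (\sum_(a : X * Y) (marg1 P a)%:E * Gext f G (Df f (cond P a) q) =
     \sum_(x : X) \sum_(y : Y) (marg1 P (x, y))%:E * Gext f G (Df f (cond P (x, y)) q))%E.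
    by rewrite pair_bigA; apply: eq_bigr => -[].
  rewrite exchange_big; apply: eq_bigr => y _.
  have cE x : marg1 P (x, y) != 0 -> cond P (x, y) = cond (pYZ P) y.
    move=> m; apply: funext => z; rewrite /cond /pYZ /marg1 /= exchange_big.
    have PYn : \sum_(x' : X) \sum_(z' : Z) P (x', y, z') != 0.
      apply/negP => /eqP h; move: m; rewrite /marg1 big1 ?eqxx // => z' _.
      exact: @PY0 _ _ _ _ P Pp y h x z'.
    by apply/eqP; rewrite eqr_div //; apply/eqP; rewrite [X in _ = X]mulrC; exact: Pm.
  transitivity (\sum_(x : X) (marg1 P (x, y))%:E * Gext f G (Df f (cond (pYZ P) y) q))%E.
    apply: eq_bigr => x _.
    have [m0|m] := eqVneq (marg1 P (x, y)) 0; first by rewrite m0 !mul0e.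
    by rewrite cE.
  rewrite -ge0_sume_distrl; last by move=> x _; rewrite lee_fin sumr_ge0.
  by rewrite sumEFin /marg1 /pYZ /= exchange_big.
apply/seteqP; split => _ [q qp <-]; exists q => //; by rewrite key.
Qed.
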